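(* Let $f^*$ be the norm on $\mathbb{R}^2$ whose unit ball is $\{(x_1,x_2): |x_1+x_2|\le4,\ |x_1-x_2|\le1\}$. Then there exists $\alpha=(\alpha_1,\alpha_2)\in\mathbb{R}^2\setminus\mathbb{Q}^2$ such that the sequence of all $f^*$-best simultaneous approximations $(p_\nu,a_\nu)$ to $\alpha$ has constant signature sequence: $\operatorname{sign}\xi_\nu=(+,+)$ for every $\nu$, where $\xi_\nu=\alpha p_\nu-a_\nu$.
   Context: For a vector $\eta=(\eta_1,\eta_2)$, $\operatorname{sign}\eta=(\operatorname{sign}\eta_1,\operatorname{sign}\eta_2)$. For a norm $f$ on $\mathbb{R}^n$ and $\alpha\in\mathbb{R}^n$, an $f$-best simultaneous approximation is an integer point $\tau=(p,a_1,\dots,a_n)\in\mathbb{Z}^{n+1}$ with $p\ge1$ such that $f(\alpha q-b)>f(\alpha p-a)$ for all $(q,b)\in\mathbb{Z}^{n+1}$ with $1\le q\le p-1$ and for all $(p,b)$ with $b\ne a$. They form a sequence $(p_\nu,a_\nu)$ with $p_1<p_2<\dots$. *)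

(* Defs.v *)
From Stdlib Require Import Reals ZArith QArith Qreals.
Open Scope R_scope.

(* The norm f* on R^2 whose unit ball is
   { (x1,x2) : |x1+x2| <= 4, |x1-x2| <= 1 }.
   Its gauge (Minkowski functional) is max(|x1+x2|/4, |x1-x2|). *)
Definition fstar (x1 x2 : R) : R :=
  Rmax (Rabs (x1 + x2) / 4) (Rabs (x1 - x2)).

Definition err (al1 al2 : R) (q b1 b2 : Z) : R :=
  fstar (al1 * IZR q - IZR b1) (al2 * IZR q - IZR b2).

Definition is_best_approx (al1 al2 : R) (p a1 a2 : Z) : Prop :=
  (1 <= p)%Z /\
  (forall q b1 b2 : Z, (1 <= q <= p - 1)%Z ->
      err al1 al2 q b1 b2 > err al1 al2 p a1 a2) /\
  (forall b1 b2 : Z, (b1, b2) <> (a1, a2) ->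
      err al1 al2 p b1 b2 > err al1 al2 p a1 a2).

Definition in_Q2 (al1 al2 : R) : Prop :=
  exists r1 r2 : Q, Q2R r1 = al1 /\ Q2R r2 = al2.

(* Main.v *)
Require Import Defs.
From Stdlib Require Import Reals ZArith QArith Qreals Znumtheory Lra Lia.
Open Scope R_scope.

Lemma fstar_lb x y : fstar x y >= (x+y)/4 /\ fstar x y >= -(x+y)/4 /\
  fstar x y >= x - y /\ fstar x y >= y - x.
Proof.
  unfold fstar.
  pose proof (Rmax_l (Rabs (x + y) / 4) (Rabs (x - y))).
  pose proof (Rmax_r (Rabs (x + y) / 4) (Rabs (x - y))).
  pose proof (Rle_abs (x+y)). pose proof (Rle_abs (x-y)).
  pose proof (Rabs_Ropp (x+y)). pose proof (Rle_abs (-(x+y))).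
  pose proof (Rabs_Ropp (x-y)). pose proof (Rle_abs (-(x-y))).
  lra.
Qed.

Lemma fstar_ub x y c : (x+y)/4 <= c -> -(x+y)/4 <= c -> x - y <= c -> y - x <= c ->
  fstar x y <= c.
Proof.
  intros. unfold fstar. apply Rmax_lub.
  - unfold Rabs; destruct (Rcase_abs (x+y)); lra.
  - unfold Rabs; destruct (Rcase_abs (x-y)); lra.
Qed.

Lemma fstar_sym x y : fstar x y = fstar y x.
Proof.
  unfold fstar. replace (y + x) with (x + y) by ring.
  replace (y - x) with (- (x - y)) by ring. rewrite Rabs_Ropp. reflexivity.
Qed.

Lemma level (D M M' q a b : Z) (t s al1 al2 : R) :
  (1 <= D)%Z ->
  (forall q, (D | q * M')%Z -> (D | q)%Z) ->
  0 <= t <= / (32 * (32 * IZR D * IZR D) * (32 * IZR D * IZR D)) ->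
  / (32 * (32 * IZR D * IZR D) * (32 * IZR D * IZR D)) <= s <=
    2 / (32 * (32 * IZR D * IZR D) * (32 * IZR D * IZR D)) ->
  al1 = IZR M / IZR D + / (32 * IZR D * IZR D) + t ->
  al2 = IZR M' / IZR D + s ->
  (1 <= q)%Z -> (q < 32 * D * D)%Z ->
  fstar (al1 * IZR q - IZR a) (al2 * IZR q - IZR b) >=
  fstar (al1 * IZR D - IZR M) (al2 * IZR D - IZR M').
Proof.
  intros HD Hcop Ht Hs Hal1 Hal2 Hq1 Hq2.
  set (d := IZR D) in *.
  assert (Hd : 1 <= d) by (apply IZR_le; exact HD).
  set (e := 32 * d * d) in *.
  set (id := / d). set (ie := / e).
  assert (Hid : 0 < id) by (apply Rinv_0_lt_compat; lra).
  assert (Hidle : id <= 1).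
  { unfold id. apply Rle_trans with (/1); [apply Rinv_le_contravar; lra | rewrite Rinv_1; lra]. }
  assert (Hdid : d * id = 1) by (unfold id; field; lra).
  assert (Hie : ie = id * id / 32) by (unfold ie, id, e; field; lra).
  assert (HF : / (32 * e * e) = ie * ie / 32) by (unfold ie, e; field; lra).
  rewrite HF in Ht, Hs.
  assert (Hdie : d * ie = id / 32) by (unfold ie, id, e; field; lra).
  assert (Hiele : ie <= id / 32) by (rewrite Hie; nra).
  assert (Hie0 : 0 < ie) by (rewrite Hie; nra).
  assert (Hiesmall : ie <= 1/32) by lra.
  assert (Heie : e * ie = 1) by (unfold ie; field; unfold e; nra).
  assert (Hx1 : al1 * d - IZR M = d * ie + d * t)
    by (rewrite Hal1; unfold ie; field; unfold e; nra).
  assert (Hx2 : al2 * d - IZR M' = d * s)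
    by (rewrite Hal2; field; lra).
  rewrite Hx1, Hx2.
  assert (Hdt0 : 0 <= d * t) by nra.
  assert (Hdts : d * t <= d * s) by nra.
  assert (Hds : d * s <= d * ie / 512).
  { assert (s <= ie / 512) by nra. nra. }
  set (phi := d * ie + d * t - d * s).
  assert (Hub : fstar (d * ie + d * t) (d * s) <= phi).
  { apply fstar_ub; unfold phi; lra. }
  assert (Hphi : phi <= id / 32) by (unfold phi; lra).
  apply Rle_ge. apply Rle_trans with phi; [exact Hub|].
  set (Q := IZR q).
  assert (HQ1 : 1 <= Q) by (apply IZR_le; exact Hq1).
  assert (HQe : Q <= e).
  { unfold Q, e, d. rewrite <- !mult_IZR. apply IZR_le. lia. }
  assert (HQs0 : 0 <= Q * s) by nra.
  assert (HQs : Q * s <= ie / 16).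
  { assert (Q * s <= e * (2 * (ie * ie / 32))) by nra.
    assert (E1 : e * (2 * (ie * ie / 32)) = (e * ie) * ie / 16) by field.
    rewrite Heie in E1. lra. }
  assert (HQt0 : 0 <= Q * t) by nra.
  assert (HQt : Q * t <= ie / 32).
  { assert (Q * t <= e * (ie * ie / 32)) by nra.
    assert (E1 : e * (ie * ie / 32) = (e * ie) * ie / 32) by field.
    rewrite Heie in E1. lra. }
  assert (HQts : Q * t <= Q * s) by nra.
  set (n' := (q * M' - b * D)%Z).
  assert (Hy : al2 * Q - IZR b = IZR n' * id + Q * s).
  { unfold n'. rewrite minus_IZR, !mult_IZR. fold Q d. rewrite Hal2. unfold id. field. lra. }
  pose proof (fstar_lb (al1 * Q - IZR b) (al2 * Q - IZR b)) as _.
  destruct (Z.eq_dec n' 0) as [Hn0 | Hn0].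
  -
    assert (Hdiv : (D | q * M')%Z).
    { exists b. unfold n' in Hn0. lia. }
    destruct (Hcop q Hdiv) as [m Hm].
    assert (Hm1 : (1 <= m)%Z) by nia.
    assert (Hm2 : (m <= 32 * D - 1)%Z) by nia.
    assert (HQm : Q = IZR m * d) by (unfold Q, d; rewrite Hm, mult_IZR; reflexivity).
    assert (HQd : d <= Q).
    { rewrite HQm. assert (1 <= IZR m) by (apply IZR_le; lia). nra. }
    assert (HQed : Q <= e - d).
    { rewrite HQm. unfold e. assert (IZR m <= 32 * d - 1).
      { unfold d. replace 1 with (IZR 1) by reflexivity. rewrite <- mult_IZR, <- minus_IZR.
        apply IZR_le. lia. }
      nra. }
    assert (HQie1 : Q * ie <= 1 - d * ie).
    { assert (Q * ie <= (e - d) * ie) by nra. lra. }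
    assert (HQie2 : d * ie <= Q * ie) by nra.
    assert (Hx2' : al2 * Q - IZR b = Q * s).
    { rewrite Hy. rewrite Hn0. ring. }
    set (B := (a - m * M)%Z).
    assert (Hx1' : al1 * Q - IZR a = - IZR B + Q * ie + Q * t).
    { unfold B. rewrite minus_IZR, mult_IZR. rewrite Hal1, HQm. unfold ie, e. field. lra. }
    assert (Hcomb : Q * ie + Q * t - Q * s >= d * ie + d * t - d * s).
    { assert (0 <= ie + t - s) by nra. nra. }
    pose proof (fstar_lb (al1 * Q - IZR a) (al2 * Q - IZR b)) as Hlb.
    rewrite Hx1', Hx2' in Hlb |- *.
    unfold phi.
    destruct (Z_lt_le_dec B 0) as [HB | HB].
    + assert (IZR B <= -1) by (apply IZR_le; lia). lra.
    + destruct (Z.eq_dec B 0) as [HB0 | HB0].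
      * assert (IZR B = 0) by (rewrite HB0; reflexivity). lra.
      * destruct (Z.eq_dec B 1) as [HB1 | HB1].
        -- assert (IZR B = 1) by (rewrite HB1; reflexivity). lra.
        -- assert (2 <= IZR B) by (apply IZR_le; lia). lra.
  -
    pose proof (fstar_lb (al1 * Q - IZR a) (al2 * Q - IZR b)) as Hlb.
    rewrite Hy in Hlb |- *.
    destruct (Z_lt_le_dec n' 0) as [Hn | Hn].
    + assert (IZR n' <= -1) by (apply IZR_le; lia).
      assert (IZR n' * id <= - id) by nra. lra.
    + assert (1 <= IZR n') by (apply IZR_le; lia).
      assert (id <= IZR n' * id) by nra. lra.
Qed.

Lemma level_pos (D M M' : Z) (t s al1 al2 : R) :
  (1 <= D)%Z -> 0 <= t -> 0 < s ->
  al1 = IZR M / IZR D + / (32 * IZR D * IZR D) + t ->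
  al2 = IZR M' / IZR D + s ->
  0 < al1 * IZR D - IZR M /\ 0 < al2 * IZR D - IZR M'.
Proof.
  intros HD Ht Hs H1 H2. assert (Hd : 1 <= IZR D) by (apply IZR_le; exact HD).
  split.
  - rewrite H1. replace ((IZR M / IZR D + / (32 * IZR D * IZR D) + t) * IZR D - IZR M)
      with (/ (32 * IZR D) + t * IZR D) by (field; lra).
    assert (0 < / (32 * IZR D)) by (apply Rinv_0_lt_compat; lra). nra.
  - rewrite H2. replace ((IZR M' / IZR D + s) * IZR D - IZR M') with (s * IZR D) by (field; lra).
    nra.
Qed.

Fixpoint NN (k : nat) : Z := match k with O => 1%Z | S j => (32 * NN j * NN j)%Z end.
Fixpoint ip (c : bool) (n : nat) : Z :=
  match n with
  | O => 0%Z
  | S m => (ip c m * (32 * NN m) + (if Bool.eqb (Nat.odd (S m)) c then 1 else 0))%Z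
  end.
Definition ps (c : bool) (n : nat) : R := IZR (ip c n) / IZR (NN n).

Lemma NN_S k : NN (S k) = (32 * NN k * NN k)%Z.
Proof. reflexivity. Qed.

Lemma N_pos k : (1 <= NN k)%Z.
Proof. induction k; [simpl; lia|]. rewrite NN_S. nia. Qed.

Lemma N_ge k : (Z.of_nat k + 1 <= NN k)%Z.
Proof. induction k. - simpl; lia. - rewrite NN_S. pose proof (N_pos k). nia. Qed.

Lemma NR_pos k : 1 <= IZR (NN k).
Proof. apply IZR_le. apply N_pos. Qed.

Lemma NR_S k : IZR (NN (S k)) = 32 * IZR (NN k) * IZR (NN k).
Proof. rewrite NN_S, !mult_IZR. reflexivity. Qed.

Definition term (c : bool) (m : nat) : R :=
  if Bool.eqb (Nat.odd m) c then / IZR (NN m) else 0.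

Lemma ps_S c m : ps c (S m) = ps c m + term c (S m).
Proof.
  unfold ps, term. pose proof (NR_pos m).
  change (ip c (S m)) with (ip c m * (32 * NN m) + (if Bool.eqb (Nat.odd (S m)) c then 1 else 0))%Z.
  rewrite NR_S, plus_IZR, !mult_IZR.
  destruct (Bool.eqb (Nat.odd (S m)) c); simpl; field; lra.
Qed.

Lemma term_bd c m : 0 <= term c m <= / IZR (NN m).
Proof.
  unfold term. pose proof (NR_pos m).
  assert (0 < / IZR (NN m)) by (apply Rinv_0_lt_compat; lra).
  destruct (Bool.eqb (Nat.odd m) c); lra.
Qed.

Lemma inv_N_S k : / IZR (NN (S k)) <= / IZR (NN k) / 2.
Proof.
  rewrite NR_S. pose proof (NR_pos k).
  unfold Rdiv. rewrite <- Rinv_mult.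
  apply Rinv_le_contravar; nra.
Qed.

Lemma ps_grow c : Un_growing (ps c).
Proof. intro n. rewrite ps_S. pose proof (term_bd c (S n)). lra. Qed.

Lemma ps_mono c n m : (n <= m)%nat -> ps c n <= ps c m.
Proof.
  induction 1. lra. pose proof (ps_grow c m). lra.
Qed.

Lemma L1 c k m : ps c (k + m) - ps c k <= 2 / IZR (NN (S k)) - 2 / IZR (NN (S (k + m))).
Proof.
  induction m.
  - rewrite Nat.add_0_r. lra.
  - replace (k + S m)%nat with (S (k + m)) by lia.
    rewrite ps_S. pose proof (term_bd c (S (k + m))).
    pose proof (inv_N_S (S (k + m))). unfold Rdiv in *. lra.
Qed.

Lemma inv_le1 x : 1 <= x -> / x <= 1.
Proof. intro. apply Rle_trans with (/1); [apply Rinv_le_contravar; lra | rewrite Rinv_1; lra]. Qed.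

Lemma inv_pos' x : 1 <= x -> 0 < / x.
Proof. intro. apply Rinv_0_lt_compat; lra. Qed.

Lemma ps_ub c : has_ub (ps c).
Proof.
  exists 2. intros x [n ->].
  pose proof (L1 c 0 n) as H. simpl Nat.add in H.
  assert (H0 : ps c 0 = 0) by (unfold ps; simpl; field).
  pose proof (inv_le1 _ (NR_pos 1)). pose proof (inv_pos' _ (NR_pos (S n))).
  unfold Rdiv in H. lra.
Qed.

Definition alpha (c : bool) : R := proj1_sig (growing_cv (ps c) (ps_grow c) (ps_ub c)).

Lemma alpha_cv c : Un_cv (ps c) (alpha c).
Proof. unfold alpha. destruct (growing_cv (ps c) (ps_grow c) (ps_ub c)). simpl. exact u. Qed.

Lemma alpha_ge c n : ps c n <= alpha c.
Proof. apply growing_ineq. apply ps_grow. apply alpha_cv. Qed.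

Lemma cst_cv (r : R) : Un_cv (fun _ => r) r.
Proof. intros eps He. exists O. intros. unfold R_dist. rewrite Rminus_diag, Rabs_R0. lra. Qed.

Lemma alpha_le c k : alpha c <= ps c k + 2 / IZR (NN (S k)).
Proof.
  apply (Rle_cv_lim (Un := ps c) (Vn := fun _ => ps c k + 2 / IZR (NN (S k)))).
  - intro n. pose proof (NR_pos (S k)).
    assert (0 < 2 / IZR (NN (S k))) by (unfold Rdiv; apply Rmult_lt_0_compat; [lra| apply Rinv_0_lt_compat; lra]).
    destruct (le_lt_dec n k).
    + pose proof (ps_mono c n k l). lra.
    + replace n with (k + (n - k))%nat by lia. pose proof (L1 c k (n - k)).
      pose proof (NR_pos (S (k + (n - k)))).
      assert (0 < 2 / IZR (NN (S (k + (n - k))))) by (unfold Rdiv; apply Rmult_lt_0_compat; [lra| apply Rinv_0_lt_compat; lra]).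
      lra.
  - apply alpha_cv.
  - apply cst_cv.
Qed.

Lemma oddS n : Nat.odd (S n) = negb (Nat.odd n).
Proof. rewrite Nat.odd_succ, <- Nat.negb_odd. reflexivity. Qed.

Lemma N_pow k : exists e, (0 <= e)%Z /\ NN k = (2 ^ e)%Z.
Proof.
  induction k.
  - exists 0%Z. split; [lia| reflexivity].
  - destruct IHk as [e [He Hk]]. exists (5 + e + e)%Z. split; [lia|].
    rewrite NN_S, Hk. rewrite !Z.pow_add_r by lia. reflexivity.
Qed.

Lemma cop_odd k M q : (exists y, M = 2 * y + 1)%Z -> (NN k | q * M)%Z -> (NN k | q)%Z.
Proof.
  intros [y Hy] Hd. destruct (N_pow k) as [e [He Hk]]. rewrite Hk in *.
  apply Z.gauss with M.
  - rewrite Z.mul_comm. exact Hd.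
  - apply Zgcd_1_rel_prime. apply rel_prime_sym. apply Zpow_facts.rel_prime_Zpower_r; [exact He|].
    apply rel_prime_sym. apply prime_rel_prime. apply prime_2.
    intros [z Hz]. lia.
Qed.

Lemma eqb_negb_l c : Bool.eqb (negb c) c = false.
Proof. destruct c; reflexivity. Qed.
Lemma eqb_negb_r c : Bool.eqb c (negb c) = false.
Proof. destruct c; reflexivity. Qed.

Lemma hcop k q : (NN k | q * ip (negb (Nat.odd (S k))) k)%Z -> (NN k | q)%Z.
Proof.
  destruct k as [|j].
  - intros _. simpl. apply Z.divide_1_l.
  - apply cop_odd.
    change (ip (negb (Nat.odd (S (S j)))) (S j)) with
      (ip (negb (Nat.odd (S (S j)))) j * (32 * NN j) +
        (if Bool.eqb (Nat.odd (S j)) (negb (Nat.odd (S (S j)))) then 1 else 0))%Z.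
    rewrite (oddS (S j)), Bool.negb_involutive, Bool.eqb_reflx.
    exists (ip (Nat.odd (S j)) j * 16 * NN j)%Z. ring.
Qed.

Lemma core k :
  exists t s,
    0 <= t <= / (32 * (32 * IZR (NN k) * IZR (NN k)) * (32 * IZR (NN k) * IZR (NN k))) /\
    / (32 * (32 * IZR (NN k) * IZR (NN k)) * (32 * IZR (NN k) * IZR (NN k))) <= s <=
      2 / (32 * (32 * IZR (NN k) * IZR (NN k)) * (32 * IZR (NN k) * IZR (NN k))) /\
    alpha (Nat.odd (S k)) = IZR (ip (Nat.odd (S k)) k) / IZR (NN k) + / (32 * IZR (NN k) * IZR (NN k)) + t /\
    alpha (negb (Nat.odd (S k))) = IZR (ip (negb (Nat.odd (S k))) k) / IZR (NN k) + s.
Proof.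
  set (c := Nat.odd (S k)).
  assert (T1 : term c (S k) = / IZR (NN (S k))).
  { unfold term. fold c. rewrite Bool.eqb_reflx. reflexivity. }
  assert (T2 : term c (S (S k)) = 0).
  { unfold term. rewrite (oddS (S k)). fold c. rewrite eqb_negb_l. reflexivity. }
  assert (T3 : term (negb c) (S k) = 0).
  { unfold term. fold c. rewrite eqb_negb_r. reflexivity. }
  assert (T4 : term (negb c) (S (S k)) = / IZR (NN (S (S k)))).
  { unfold term. rewrite (oddS (S k)). fold c. rewrite Bool.eqb_reflx. reflexivity. }
  pose proof (ps_S c k) as P1. pose proof (ps_S c (S k)) as P2.
  pose proof (ps_S (negb c) k) as P3. pose proof (ps_S (negb c) (S k)) as P4.
  rewrite T1 in P1. rewrite T2 in P2. rewrite T3 in P3. rewrite T4 in P4.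
  pose proof (alpha_ge c (S k)). pose proof (alpha_le c (S (S k))).
  pose proof (alpha_ge (negb c) (S (S k))). pose proof (alpha_le (negb c) (S k)).
  pose proof (NR_pos k) as Hd.
  pose proof (NR_S k) as E1. pose proof (NR_S (S k)) as E2. pose proof (NR_S (S (S k))) as E3.
  set (d := IZR (NN k)) in *.
  set (e := IZR (NN (S k))) in *. set (F := IZR (NN (S (S k)))) in *.
  set (G := IZR (NN (S (S (S k))))) in *.
  assert (He : 1 <= e) by (unfold e; apply NR_pos).
  assert (HF : 1 <= F) by (unfold F; apply NR_pos).
  assert (HG : 2 / G <= / F).
  { rewrite E3. unfold Rdiv. replace (/ (32 * F * F)) with (/ (32 * F) * / F) by (field; lra).
    assert (/ (32 * F) <= 1/ 16).
    { replace (1/16) with (/16) by field. apply Rinv_le_contravar; lra. }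
    pose proof (inv_pos' F HF). nra. }
  exists (alpha c - ps c (S k)), (alpha (negb c) - ps (negb c) k).
  rewrite <- E1. rewrite <- E2.
  split; [lra|]. split; [unfold Rdiv in *; lra|]. split.
  - rewrite P1. unfold ps. fold d. ring.
  - unfold ps at 1. fold d. ring.
Qed.

Lemma lev_pos k :
  0 < alpha (Nat.odd (S k)) * IZR (NN k) - IZR (ip (Nat.odd (S k)) k) /\
  0 < alpha (negb (Nat.odd (S k))) * IZR (NN k) - IZR (ip (negb (Nat.odd (S k))) k).
Proof.
  destruct (core k) as [t [s [Ht [Hs [H1 H2]]]]].
  apply (level_pos _ _ _ t s); auto using N_pos; try lra.
  apply Rlt_le_trans with (2 := proj1 Hs). apply Rinv_0_lt_compat.
  pose proof (NR_pos k) as Hk. set (d := IZR (NN k)) in *.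
  assert (0 < 32 * d * d) by nra. apply Rmult_lt_0_compat; [|assumption]. apply Rmult_lt_0_compat; lra.
Qed.

Lemma lev_gen k q a b :
  (1 <= q)%Z -> (q < NN (S k))%Z ->
  fstar (alpha (Nat.odd (S k)) * IZR q - IZR a) (alpha (negb (Nat.odd (S k))) * IZR q - IZR b) >=
  fstar (alpha (Nat.odd (S k)) * IZR (NN k) - IZR (ip (Nat.odd (S k)) k))
        (alpha (negb (Nat.odd (S k))) * IZR (NN k) - IZR (ip (negb (Nat.odd (S k))) k)).
Proof.
  intros Hq1 Hq2.
  destruct (core k) as [t [s [Ht [Hs [H1 H2]]]]].
  rewrite NN_S in Hq2.
  apply (level _ _ _ _ _ _ t s); auto using N_pos, hcop.
Qed.

Definition al1 := alpha true.
Definition al2 := alpha false.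

Lemma lev_k k q a1 a2 : (1 <= q)%Z -> (q < NN (S k))%Z ->
  err al1 al2 q a1 a2 >= err al1 al2 (NN k) (ip true k) (ip false k).
Proof.
  intros. unfold err, al1, al2.
  pose proof (lev_gen k q) as L.
  destruct (Nat.odd (S k)) eqn:Ho; simpl in L.
  - apply L; assumption.
  - rewrite (fstar_sym (alpha true * _ - _)), (fstar_sym (alpha true * IZR (NN k) - _)).
    apply L; assumption.
Qed.

Lemma pos_k k : 0 < al1 * IZR (NN k) - IZR (ip true k) /\ 0 < al2 * IZR (NN k) - IZR (ip false k).
Proof.
  pose proof (lev_pos k) as L. unfold al1, al2.
  destruct (Nat.odd (S k)); simpl in L; tauto.
Qed.

Lemma find_k p : (1 <= p)%Z -> exists k, (NN k <= p < NN (S k))%Z.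
Proof.
  intro Hp.
  assert (H : forall n, (exists k, (NN k <= p < NN (S k))%Z) \/ (NN n <= p)%Z).
  { induction n.
    - right. simpl. lia.
    - destruct IHn as [H|H]; [left; exact H|].
      destruct (Z_lt_le_dec p (NN (S n))).
      + left. exists n. lia.
      + right. lia. }
  destruct (H (Z.to_nat p)) as [H'|H']; [exact H'|].
  pose proof (N_ge (Z.to_nat p)). lia.
Qed.

Theorem theorem2p7 :
  exists al1 al2 : R,
    ~ in_Q2 al1 al2 /\
    forall p a1 a2 : Z, is_best_approx al1 al2 p a1 a2 ->
      0 < al1 * IZR p - IZR a1 /\ 0 < al2 * IZR p - IZR a2.
Proof.
  exists al1, al2. split.
  - intros [[n1 d1] [[n2 d2] [H1 H2]]].
    unfold Q2R in H1, H2. simpl in H1, H2.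
    set (D := (Z.pos d1 * Z.pos d2)%Z).
    assert (HD : (1 <= D)%Z) by (unfold D; lia).
    destruct (find_k D HD) as [k Hk].
    pose proof (lev_k k D (n1 * Z.pos d2) (n2 * Z.pos d1) HD (proj2 Hk)) as L.
    unfold err in L.
    assert (E1 : al1 * IZR D - IZR (n1 * Z.pos d2) = 0).
    { rewrite <- H1. unfold D. rewrite !mult_IZR. field.
      apply not_0_IZR. lia. }
    assert (E2 : al2 * IZR D - IZR (n2 * Z.pos d1) = 0).
    { rewrite <- H2. unfold D. rewrite !mult_IZR. field.
      apply not_0_IZR. lia. }
    rewrite E1, E2 in L.
    assert (F0 : fstar 0 0 = 0).
    { unfold fstar. rewrite Rplus_0_r, Rminus_0_r, Rabs_R0. unfold Rdiv. rewrite Rmult_0_l.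
      apply Rmax_left. lra. }
    rewrite F0 in L.
    destruct (pos_k k) as [P1 P2].
    pose proof (fstar_lb (al1 * IZR (NN k) - IZR (ip true k)) (al2 * IZR (NN k) - IZR (ip false k))).
    lra.
  - intros p a1 a2 [Hp [Hq Hb]].
    destruct (find_k p Hp) as [k Hk].
    pose proof (lev_k k p a1 a2 Hp (proj2 Hk)) as L.
    pose proof (N_pos k).
    destruct (Z.eq_dec (NN k) p) as [Ep | Ep].
    + subst p.
      destruct (Z.eq_dec a1 (ip true k)) as [Ea1|Ea1];
      [destruct (Z.eq_dec a2 (ip false k)) as [Ea2|Ea2]|].
      * subst a1 a2. apply pos_k.
      * exfalso. assert (Hne : (ip true k, ip false k) <> (a1, a2)) by congruence.
        pose proof (Hb _ _ Hne). lra.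
      * exfalso. assert (Hne : (ip true k, ip false k) <> (a1, a2)) by congruence.
        pose proof (Hb _ _ Hne). lra.
    + exfalso.
      assert (Hr : (1 <= NN k <= p - 1)%Z) by lia.
      pose proof (Hq _ (ip true k) (ip false k) Hr). lra.
Qed.
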